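(* Define a sequence $\gamma(0),\gamma(1),\gamma(2),\dots$ by $\gamma(0)=0$ and recursively $$\gamma(2^l-k)=\frac{2^l+2(-1)^l}{3}-k+2\gamma(k)\qquad (l\ge 0,\ 0\le k\le 2^{l-1}).$$ For $n\ge0$ let $P(n)$ be the $n\times n$ matrix with entries $\binom{i+j}{i}$, $0\le i,j<n$, and $\chi_n(t)=\det(tI(n)-P(n))$. Then for all $n\in\mathbf{N}$, $$\chi_n(t)\equiv (t+1)^{\gamma(n)}(t^2+t+1)^{\gamma_2(n)}\pmod 2,$$ where $\gamma_2(n)=\frac12(n-\gamma(n))$.
   Context: $I(n)$ is the $n\times n$ identity matrix; the congruence is coefficientwise in $\mathbf{Z}[t]$. *)

(* Defs.v *)
From HB Require Import structures.
From mathcomp Require Import all_boot all_order all_algebra.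
Set Implicit Arguments. Unset Strict Implicit. Unset Printing Implicit Defensive.
Import Order.TTheory GRing.Theory Num.Theory.
Local Open Scope ring_scope.

(* gamma satisfies gamma(0)=0 and, for all l >= 0 and 0 <= k <= 2^(l-1)
   (i.e. 2k <= 2^l, so that for l = 0 only k = 0 is allowed),
   gamma(2^l - k) = (2^l + 2(-1)^l)/3 - k + 2 gamma(k). *)
Definition gamma_rec (gamma : nat -> int) : Prop :=
  gamma 0%N = 0 /\
  forall l k : nat, (k.*2 <= 2 ^ l)%N ->
    gamma (2 ^ l - k)%N =
      (((2 ^ l)%:Z + 2 * (-1) ^+ l) %/ 3)%Z - k%:Z + 2 * gamma k.

Definition Pmat (n : nat) : 'M[int]_n := \matrix_(i < n, j < n) ('C(i + j, i))%:Z.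

Definition chi (n : nat) : {poly int} := char_poly (Pmat n).

Definition cong2 (p q : {poly int}) : Prop := forall i : nat, (2 %| p`_i - q`_i)%Z.

(* Main.v *)
Require Import Defs.
From HB Require Import structures.
From mathcomp Require Import all_boot all_order all_algebra all_field.
From mathcomp Require Import fingroup perm.
From mathcomp Require Import ring zify.
Set Implicit Arguments. Unset Strict Implicit. Unset Printing Implicit Defensive.
Import Order.TTheory GRing.Theory Num.Theory.
Local Open Scope ring_scope.

Notation F := ('F_2 : fieldType).

Lemma pr2 : prime 2. Proof. by []. Qed.
Lemma chF : (2%N \in [pchar F]). Proof. exact: (pchar_Fp pr2). Qed.
Lemma chP : (2%N \in [pchar {poly F}]). Proof. by rewrite pchar_poly chF. Qed.
Lemma F2sq (x : F) : x ^+ 2 = x.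
Proof. by have := expf_card x; rewrite card_Fp. Qed.

Lemma coef_X1 (a i : nat) : (('X + 1 : {poly F}) ^+ a)`_i = ('C(a, i))%:R.
Proof.
elim: a i => [|a IH] i.
  by rewrite expr0 coef1; case: i.
rewrite exprS mulrDl mul1r mulrC coefD coefMX IH.
case: i => [|i] /=; rewrite !IH; first by rewrite add0r !bin0.
by rewrite binS natrD addrC.
Qed.

Lemma X1_pow2 (e : nat) : ('X + 1 : {poly F}) ^+ (2 ^ e) = 'X^(2 ^ e) + 1.
Proof.
elim: e => [|e IH]; first by rewrite !expn0 !expr1.
rewrite expnS mulnC exprM IH exprM sqrrD1 ?mulr1 -exprM.
by rewrite mulr2n (addrr_pchar2 chP) addr0.
Qed.

Lemma Lbin (e a m : nat) : (m < 2 ^ e)%N ->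
  ('C(a + 2 ^ e, m))%:R = ('C(a, m))%:R :> F.
Proof.
move=> hm; rewrite -!coef_X1 exprD X1_pow2 mulrDr mulr1 coefD coefMXn hm.
by rewrite add0r.
Qed.

Definition b (i j : nat) : F := ('C(i + j, i))%:R.

Lemma binC (m n : nat) : 'C(m + n, m) = 'C(m + n, n).
Proof. by have := bin_sub (leq_addl m n); rewrite addnK. Qed.

Lemma L1a (e i j : nat) : (i < 2 ^ e)%N -> b i (2 ^ e + j) = b i j.
Proof.
move=> hi; rewrite /b.
have -> : (i + (2 ^ e + j) = (i + j) + 2 ^ e)%N by lia.
exact: Lbin.
Qed.

Lemma L1b (e i j : nat) : (j < 2 ^ e)%N -> b (2 ^ e + i) j = b i j.
Proof.
move=> hj; rewrite /b !binC.
have -> : (2 ^ e + i + j = (i + j) + 2 ^ e)%N by lia.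
exact: Lbin.
Qed.

Lemma L1c (e i j : nat) : (i < 2 ^ e)%N -> (j < 2 ^ e)%N ->
  b (2 ^ e + i) (2 ^ e + j) = 0.
Proof.
move=> hi hj; rewrite /b.
have -> : (2 ^ e + i + (2 ^ e + j) = (i + j) + 2 ^ e.+1)%N by rewrite expnS; lia.
rewrite Lbin ?bin_small //; try lia; rewrite expnS; lia.
Qed.

Definition r (l i j : nat) : F := b (2 ^ l - 1 - i) (2 ^ l - 1 - j).

Lemma r_ll (l i j : nat) : (i < 2 ^ l)%N -> (j < 2 ^ l)%N -> r l.+1 i j = 0.
Proof.
move=> hi hj; rewrite /r.
have -> : (2 ^ l.+1 - 1 - i = 2 ^ l + (2 ^ l - 1 - i))%N by rewrite expnS; lia.
have -> : (2 ^ l.+1 - 1 - j = 2 ^ l + (2 ^ l - 1 - j))%N by rewrite expnS; lia.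
by rewrite L1c //; lia.
Qed.

Lemma r_lh (l i j : nat) : (i < 2 ^ l)%N -> (j < 2 ^ l)%N ->
  r l.+1 i (2 ^ l + j) = r l i j.
Proof.
move=> hi hj; rewrite /r.
have -> : (2 ^ l.+1 - 1 - i = 2 ^ l + (2 ^ l - 1 - i))%N by rewrite expnS; lia.
have -> : (2 ^ l.+1 - 1 - (2 ^ l + j) = 2 ^ l - 1 - j)%N by rewrite expnS; lia.
by rewrite L1b //; lia.
Qed.

Lemma r_hl (l i j : nat) : (i < 2 ^ l)%N -> (j < 2 ^ l)%N ->
  r l.+1 (2 ^ l + i) j = r l i j.
Proof.
move=> hi hj; rewrite /r.
have -> : (2 ^ l.+1 - 1 - j = 2 ^ l + (2 ^ l - 1 - j))%N by rewrite expnS; lia.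
have -> : (2 ^ l.+1 - 1 - (2 ^ l + i) = 2 ^ l - 1 - i)%N by rewrite expnS; lia.
by rewrite L1a //; lia.
Qed.

Lemma r_hh (l i j : nat) : (i < 2 ^ l)%N -> (j < 2 ^ l)%N ->
  r l.+1 (2 ^ l + i) (2 ^ l + j) = r l i j.
Proof.
move=> hi hj; rewrite /r.
have -> : (2 ^ l.+1 - 1 - (2 ^ l + i) = 2 ^ l - 1 - i)%N by rewrite expnS; lia.
have -> : (2 ^ l.+1 - 1 - (2 ^ l + j) = 2 ^ l - 1 - j)%N by rewrite expnS; lia.
by [].
Qed.

Lemma sum_split (l : nat) (G : nat -> F) :
  \sum_(0%N <= k < (2 ^ l.+1)%N) G k =
  \sum_(0%N <= k < (2 ^ l)%N) G k + \sum_(0%N <= k < (2 ^ l)%N) G (2 ^ l + k)%N.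
Proof.
rewrite expnS mul2n -addnn (@big_cat_nat _ _ _ (2 ^ l)%N) //=; last exact: leq_addr.
congr (_ + _).
rewrite -{1}(add0n (2 ^ l)%N) big_addn addnK.
by apply: eq_bigr => k _; rewrite addnC.
Qed.

Lemma idx_split (l i : nat) : (i < 2 ^ l.+1)%N ->
  (i < 2 ^ l)%N \/ exists2 i', i = (2 ^ l + i')%N & (i' < 2 ^ l)%N.
Proof.
move=> hi; case: (ltnP i (2 ^ l)) => h; [by left | right].
exists (i - 2 ^ l)%N; first by rewrite subnKC.
by move: hi; rewrite expnS; lia.
Qed.

Lemma sumE (l : nat) (G H : nat -> F) : (forall k, (k < 2 ^ l)%N -> G k = H k) ->
  \sum_(0%N <= k < (2 ^ l)%N) G k = \sum_(0%N <= k < (2 ^ l)%N) H k.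
Proof. by move=> e; apply: eq_big_nat => k /andP[_ hk]; apply: e. Qed.

Lemma sum0 (l : nat) (G : nat -> F) : (forall k, (k < 2 ^ l)%N -> G k = 0) ->
  \sum_(0%N <= k < (2 ^ l)%N) G k = 0.
Proof. by move=> e; rewrite (sumE (H := fun=> 0)) ?big1. Qed.

Lemma Sprod (l : nat) : forall i j, (i < 2 ^ l)%N -> (j < 2 ^ l)%N ->
  \sum_(0%N <= k < (2 ^ l)%N) b i k * b k j = r l i j /\
  \sum_(0%N <= k < (2 ^ l)%N) r l i k * b k j = (i == j)%:R.
Proof.
elim: l => [|l IH] i j.
  rewrite expn0; case: i => [|//] _; case: j => [|//] _.
  by rewrite !big_nat1 /r /b /= mulr1.
move=> hi hj; rewrite !sum_split.
case: (idx_split hi) => [hi' | [i' -> hi']];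
case: (idx_split hj) => [hj' | [j' -> hj']].
- have [IH1 IH2] := IH i j hi' hj'.
  split.
    rewrite r_ll // [X in _ + X](sumE (H := fun k => b i k * b k j)).
      exact: (addrr_pchar2 chF).
    by move=> k hk; rewrite L1a // L1b.
  rewrite sum0; last by move=> k hk; rewrite r_ll // mul0r.
  rewrite add0r -IH2; apply: sumE => k hk.
  by rewrite r_lh // L1b.
- have [IH1 IH2] := IH i j' hi' hj'.
  split.
    rewrite r_lh // [X in _ + X]sum0 ?addr0; last by move=> k hk; rewrite L1c ?mulr0.
    by rewrite -IH1; apply: sumE => k hk; rewrite L1a.
  rewrite sum0; last by move=> k hk; rewrite r_ll // mul0r.
  rewrite sum0 ?addr0; last by move=> k hk; rewrite L1c ?mulr0.
  by have -> : (i == 2 ^ l + j')%N = false by apply/eqP; lia.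
- have [IH1 IH2] := IH i' j hi' hj'.
  split.
    rewrite r_hl // [X in _ + X]sum0 ?addr0; last by move=> k hk; rewrite L1c ?mul0r.
    by rewrite -IH1; apply: sumE => k hk; rewrite L1b.
  rewrite [X in _ + X](sumE (H := fun k => r l i' k * b k j)); last first.
    by move=> k hk; rewrite r_hh // L1b.
  rewrite (sumE (H := fun k => r l i' k * b k j)); last first.
    by move=> k hk; rewrite r_hl.
  rewrite (addrr_pchar2 chF).
  by have -> : (2 ^ l + i' == j)%N = false by apply/eqP; lia.
- have [IH1 IH2] := IH i' j' hi' hj'.
  split.
    rewrite r_hh // [X in _ + X]sum0 ?addr0; last by move=> k hk; rewrite L1c ?mul0r.
    by rewrite -IH1; apply: sumE => k hk; rewrite L1b // L1a.
  rewrite [X in _ + X]sum0 ?addr0; last by move=> k hk; rewrite L1c ?mulr0.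
  rewrite eqn_add2l -IH2; apply: sumE => k hk.
  by rewrite r_hl // L1a.
Qed.

Definition Bm (n : nat) : 'M[F]_n := \matrix_(i < n, j < n) b i j.
Definition ch (n : nat) : {poly F} := char_poly (Bm n).

Lemma BB (l n : nat) (e : (n = 2 ^ l)%N) :
  Bm n *m Bm n = \matrix_(i < n, j < n) r l i j.
Proof.
apply/matrixP => i j; rewrite !mxE.
have hi : (i < 2 ^ l)%N by rewrite -e.
have hj : (j < 2 ^ l)%N by rewrite -e.
have [S _] := Sprod hi hj; rewrite -e in S.
rewrite -S big_mkord.
by apply: eq_bigr => k _; rewrite !mxE.
Qed.

Lemma BBB (l n : nat) (e : (n = 2 ^ l)%N) :
  Bm n *m Bm n *m Bm n = 1%:M.
Proof.
rewrite (BB e); apply/matrixP => i j; rewrite !mxE.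
have hi : (i < 2 ^ l)%N by rewrite -e.
have hj : (j < 2 ^ l)%N by rewrite -e.
have [_ S] := Sprod hi hj; rewrite -e in S.
rewrite -S big_mkord.
by apply: eq_bigr => k _; rewrite !mxE.
Qed.

Lemma zm (V : zmodType) (a b c d : V) : a + b + c - (b + c + d) = a - d.
Proof. by rewrite -(addrA a) addrKA. Qed.

Lemma MC (n : nat) (A : 'M[F]_n) : A *m A *m A = 1%:M ->
  char_poly_mx A *m (('X^2)%:M + 'X *: map_mx polyC A + map_mx polyC (A *m A))
  = ('X^3 - 1)%:M.
Proof.
move=> h3; set At := map_mx polyC A.
have h3' : At *m At *m At = 1%:M by rewrite -!map_mxM h3 map_mx1.
rewrite map_mxM /char_poly_mx -/At mulmxBl !mulmxDr !mul_scalar_mx.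
rewrite mul_mx_scalar -scalemxAr mulmxA h3' scalerA -expr2 zm.
by rewrite scale_scalar_mx -exprS (raddfB (@scalar_mx _ n)).
Qed.

Lemma blockdet (n k : nat) (M C : 'M[{poly F}]_(n + k)) (c : {poly F}) :
  c != 0 -> M *m C = c%:M ->
  \det M * \det (drsubmx C) = \det (ulsubmx M) * c ^+ k.
Proof.
move=> cn0 MCe.
have e := MCe; rewrite -[M]submxK -[C]submxK mulmx_block (scalar_mx_block n k c) in e.
case/eq_block_mx: e => _ eur _ edr.
pose K := block_mx (c%:M : 'M_n) (ursubmx C) 0 (drsubmx C).
have h : \det (M *m K) = \det M * (c ^+ n * \det (drsubmx C)).
  by rewrite det_mulmx det_ublock det_scalar.
rewrite -[M in M *m K]submxK mulmx_block eur edr !mulmx0 !addr0 det_lblock in h.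
rewrite det_mulmx !det_scalar in h.
apply: (mulIf (expf_neq0 n cn0)).
by rewrite mulrAC -mulrA -h mulrAC.
Qed.

Lemma ul_char (n k : nat) :
  ulsubmx (char_poly_mx (Bm (n + k))) = char_poly_mx (Bm n).
Proof.
apply/matrixP => i j; rewrite !mxE.
by [].
Qed.

Lemma dr_C (l n k : nat) : (n + k = 2 ^ l)%N -> (k.*2 <= 2 ^ l)%N ->
  drsubmx (('X^2)%:M + 'X *: map_mx polyC (Bm (n + k))
           + map_mx polyC (Bm (n + k) *m Bm (n + k)))
  = \matrix_(i < k, j < k) ('X^2 *+ (i == j) + (b (k - 1 - i) (k - 1 - j))%:P).
Proof.
move=> e hk; rewrite (BB e).
apply/matrixP => i j; rewrite !mxE.
have -> : (rshift n i == rshift n j) = (i == j) by rewrite -val_eqE /= eqn_add2l.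
have hi := ltn_ord i; have hj := ltn_ord j.
have -> : b (n + i) (n + j) = 0.
  case: l e hk => [|l] e hk; first by move: hk; rewrite expn0; lia.
  have -> : (n + i = 2 ^ l + (n + i - 2 ^ l))%N by move: hk e; rewrite expnS; lia.
  have -> : (n + j = 2 ^ l + (n + j - 2 ^ l))%N by move: hk e; rewrite expnS; lia.
  by rewrite L1c //; move: hk e; rewrite expnS; lia.
rewrite mulr0 addr0 /r.
have -> : (2 ^ l - 1 - (n + i) = k - 1 - i)%N by lia.
by have -> : (2 ^ l - 1 - (n + j) = k - 1 - j)%N by lia.
Qed.

Lemma detD (k : nat) :
  \det (\matrix_(i < k, j < k) ('X^2 *+ (i == j) + (b (k - 1 - i) (k - 1 - j))%:P))
  = ch k ^+ 2.
Proof.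
pose E := map_mx (pFrobenius_aut chP) (char_poly_mx (Bm k)).
have hE : \det E = ch k ^+ 2.
  by rewrite det_map_mx.
have Ee : forall i j, E i j = 'X^2 *+ (i == j) + (b i j)%:P.
  move=> i j; rewrite !mxE rmorphB rmorphMn.
  change ('X ^+ 2 *+ (i == j) - ((b i j)%:P) ^+ 2 = 'X^2 *+ (i == j) + (b i j)%:P).
  by rewrite -polyC_exp F2sq (oppr_pchar2 chP).
pose s : {perm 'I_k} := perm (@rev_ord_inj k).
have -> : \matrix_(i < k, j < k) ('X^2 *+ (i == j) + (b (k - 1 - i) (k - 1 - j))%:P)
    = row_perm s (col_perm s E).
  apply/matrixP => i j; rewrite [LHS]mxE [RHS]mxE [RHS]mxE Ee !permE (inj_eq rev_ord_inj) /=.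
  have -> : (k - 1 - i = k - i.+1)%N by lia.
  by have -> : (k - 1 - j = k - j.+1)%N by lia.
rewrite row_permE col_permE !det_mulmx !det_perm hE.
by rewrite (oppr_pchar2 chP) !expr1n mul1r mulr1.
Qed.

Definition cc : {poly F} := 'X^3 - 1.

Lemma cc_neq0 : cc != 0.
Proof. by rewrite /cc -polyC1 monic_neq0 // monicXnsubC. Qed.

Lemma L3 (l n k : nat) : (n + k = 2 ^ l)%N -> (k.*2 <= 2 ^ l)%N ->
  ch (n + k) * ch k ^+ 2 = ch n * cc ^+ k.
Proof.
move=> e hk.
have := blockdet cc_neq0 (MC (BBB e)).
by rewrite (dr_C e hk) detD ul_char.
Qed.

Definition u : {poly F} := 'X + 1.
Definition v : {poly F} := 'X^2 + 'X + 1.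

Lemma cc_uv : cc = u * v.
Proof.
rewrite /cc /u /v (oppr_pchar2 chP).
have -> : ('X + 1) * ('X^2 + 'X + 1) = 'X^3 + 1 + ('X^2 + 'X) *+ 2 :> {poly F}.
  by ring.
by rewrite mulr2n (addrr_pchar2 chP) addr0.
Qed.

Lemma size_u : size u = 2%N.
Proof. by rewrite /u -polyC1 size_XaddC. Qed.

Lemma size_v : size v = 3%N.
Proof.
rewrite /v -addrA size_addl size_polyXn //.
by rewrite -polyC1 size_XaddC.
Qed.

Lemma u_neq0 : u != 0. Proof. by rewrite -size_poly_gt0 size_u. Qed.
Lemma v_neq0 : v != 0. Proof. by rewrite -size_poly_gt0 size_v. Qed.

Lemma cop_vu : coprimep v u.
Proof.
apply/Bezout_coprimepP; exists (1, - 'X) => /=.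
have -> : 1 * v + - 'X * u = 1.
  by rewrite /v /u; ring.
exact: eqpxx.
Qed.

Lemma u_at1 : u.[1] = 0.
Proof. by rewrite /u !hornerE (addrr_pchar2 chF). Qed.

Lemma v_at1 : v.[1] = 1.
Proof. by rewrite /v !hornerE expr1n (addrr_pchar2 chF) add0r. Qed.

Lemma Lcancel (p : {poly F}) (x y A B : nat) :
  p * (u ^+ x * v ^+ y) = u ^+ A * v ^+ B ->
  [/\ (x <= A)%N, (y <= B)%N & p = u ^+ (A - x) * v ^+ (B - y)].
Proof.
move=> e.
have hx : (x <= A)%N.
  rewrite leqNgt; apply/negP => hlt.
  move: e; rewrite -(subnKC (ltnW hlt)) exprD.
  rewrite mulrCA -!mulrA => /(mulfI (expf_neq0 A u_neq0)).
  move/(congr1 (horner^~ 1)); rewrite !hornerM !horner_exp u_at1 v_at1 !expr1n.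
  rewrite expr0n subn_eq0 leqNgt hlt /= !(mul0r, mulr0) => /eqP.
  by rewrite eq_sym oner_eq0.
have hy : (y <= B)%N.
  rewrite leqNgt; apply/negP => hlt.
  move: e; rewrite -(subnKC (ltnW hlt)) exprD.
  have -> : p * (u ^+ x * (v ^+ B * v ^+ (y - B))) =
    v ^+ B * (p * u ^+ x * v ^+ (y - B)) by ring.
  rewrite [RHS]mulrC => /(mulfI (expf_neq0 B v_neq0)) e.
  have : v %| u ^+ A.
    rewrite -e; have -> : (y - B = (y - B).-1.+1)%N by rewrite prednK // subn_gt0.
    by rewrite exprS mulrCA dvdp_mulIl.
  move=> hd; have := coprimep_dvdl hd (coprimep_expr A cop_vu).
  by rewrite coprimepp size_v.
split=> //.
apply: (mulIf (mulf_neq0 (expf_neq0 x u_neq0) (expf_neq0 y v_neq0))).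
rewrite e mulrACA -!exprD !subnK //.
Qed.

Fixpoint cd (l : nat) : nat * nat :=
  if l is l'.+1 then (((cd l').2).*2, ((cd l').1 + (cd l').2)%N) else (1%N, 0%N).

Lemma cd_inv (l : nat) : ((cd l).1 + ((cd l).2).*2 = 2 ^ l)%N.
Proof.
elim: l => [|l IH] //=; rewrite expnS; lia.
Qed.

Lemma ch1 : ch 1 = u.
Proof.
rewrite /ch /char_poly det_mx11 !mxE /= /b /u (oppr_pchar2 chP).
by rewrite mulr1n.
Qed.

Lemma ch_neq0 (m : nat) : ch m != 0.
Proof. exact: monic_neq0 (char_poly_monic (Bm m)). Qed.

Lemma Lpow (l : nat) : ch (2 ^ l) = u ^+ (cd l).1 * v ^+ (cd l).2.
Proof.
elim: l => [|l IH]; first by rewrite expn0 ch1 /= expr1 expr0 mulr1.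
have e : (2 ^ l + 2 ^ l = 2 ^ l.+1)%N by rewrite expnS; lia.
have hk : ((2 ^ l).*2 <= 2 ^ l.+1)%N by rewrite expnS; lia.
have := L3 e hk; rewrite e expr2 mulrA [RHS]mulrC => /(mulIf (ch_neq0 _)).
rewrite IH cc_uv exprMn -(cd_inv l).
set c := (cd l).1; set d := (cd l).2 => E.
have := @Lcancel (ch (2 ^ l.+1)) c d (c + d.*2) (c + d.*2) E.
case=> _ _ ->; rewrite /=; congr (_ ^+ _ * _ ^+ _); rewrite -/c -/d; lia.
Qed.

Lemma cs3 (l : nat) : ((2 ^ l)%:Z + 2 * (-1) ^+ l = ((cd l).1)%:Z * 3 :> int).
Proof.
elim: l => [|l IH]; first by [].
have hi := cd_inv l.
move: IH hi; rewrite /= exprS expnS.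
set s := (-1) ^+ l; set c := (cd l).1; set d := (cd l).2.
move=> IH hi; lia.
Qed.

Lemma exl (n : nat) : (0 < n)%N -> exists l, (n <= 2 ^ l < n.*2)%N.
Proof.
elim: n => [//|n IH] _.
case: n IH => [|n] IH; first by exists 0%N.
have [l /andP[h1 h2]] := IH isT.
case: (ltnP (2 ^ l) n.+2) => h.
  exists l.+1; rewrite expnS; lia.
exists l; lia.
Qed.

Lemma Lmain (gamma : nat -> int) (hg : gamma_rec gamma) (n : nat) :
  exists a bb : nat,
    [/\ gamma n = a%:Z, n = (a + bb.*2)%N & ch n = u ^+ a * v ^+ bb].
Proof.
case: hg => g0 grec.
elim/ltn_ind: n => n IH.
case: n IH => [|n] IH.
  exists 0%N, 0%N; split=> //.
  by rewrite /ch /char_poly det_mx00 !expr0 mulr1.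
have [l /andP[h1 h2]] := exl (ltn0Sn n).
set m := n.+1 in IH h1 h2 *.
pose k := (2 ^ l - m)%N.
have ekm : (m + k = 2 ^ l)%N by rewrite /k; lia.
have hk2 : (k.*2 <= 2 ^ l)%N by rewrite /k; lia.
have hkm : (k < m)%N by rewrite /k; lia.
have gm := grec l k hk2.
have e2 : (2 ^ l - k = m)%N by rewrite /k; lia.
rewrite e2 in gm.
rewrite cs3 mulzK // in gm.
have [a' [b' [ga' ek chk]]] := IH k hkm.
have H := L3 ekm hk2.
rewrite ekm Lpow chk cc_uv !exprMn in H.
set c := (cd l).1 in H gm; set d := (cd l).2 in H.
have hi := cd_inv l; rewrite -/c -/d in hi.
have E : ch m * (u ^+ k * v ^+ k) = u ^+ (c + a'.*2) * v ^+ (d + b'.*2).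
  rewrite -H !exprD -!muln2 !exprM; ring.
have [hA hB ->] := Lcancel E.
exists (c + a'.*2 - k)%N, (d + b'.*2 - k)%N; split=> //.
  rewrite gm ga'; lia.
lia.
Qed.

Lemma int2 (z : int) : (z%:~R : F) = 0 -> (2 %| z)%Z.
Proof.
have -> : (2 %| z)%Z = (2 %| `|z|%N)%N by [].
case: z => m.
  by rewrite /= (dvdn_pcharf chF) => h; apply/eqP.
move=> h; change ((- (m.+1)%:R : F) = 0) in h.
by rewrite /= (dvdn_pcharf chF) -oppr_eq0 h.
Qed.

Lemma cong_of_map (p q : {poly int}) :
  map_poly (intr : int -> F) p = map_poly intr q -> cong2 p q.
Proof.
move=> e i; have := congr1 (fun s : {poly F} => s`_i) e; rewrite !coef_map /= => h.
by apply: int2; rewrite intrB h subrr.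
Qed.

Lemma map_chi (n : nat) : map_poly (intr : int -> F) (chi n) = ch n.
Proof.
rewrite /chi map_char_poly /ch; congr char_poly.
by apply/matrixP => i j; rewrite !mxE /b.
Qed.

Unset Implicit Arguments.

Theorem theorem1p4 (gamma : nat -> int) (hg : gamma_rec gamma) (n : nat) :
  [/\ 0 <= gamma n, gamma n <= n%:Z, (2 %| n%:Z - gamma n)%Z &
      cong2 (chi n)
        (('X + 1) ^+ `|gamma n|%N * ('X ^+ 2 + 'X + 1) ^+ `|((n%:Z - gamma n) %/ 2)%Z|%N)].
Proof.
have [a [bb [ga en chn]]] := Lmain hg n.
have e2 : (n%:Z - gamma n = bb%:Z * 2) by rewrite ga en; lia.
rewrite e2 mulzK // ga.
split.
- by [].
- rewrite en; lia.
- by apply/dvdzP; exists bb%:Z.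
apply: cong_of_map; rewrite map_chi chn /=.
rewrite rmorphM !rmorphXn !rmorphD !rmorph1 /= map_polyXn map_polyX.
by [].
Qed.
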